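(* Let $\kappa$ be a regular uncountable cardinal and $I$ an ideal on $\kappa$ with $NS_\kappa\subseteq I$. If $I$ is quasinormal, then $I$ is pleasant, and therefore $I$ is normal.
   Context: An ideal on $\kappa$ is a family of subsets of $\kappa$ closed under subsets and finite unions, which is $<\kappa$-complete and contains all singletons. $NS_\kappa$ is the ideal of nonstationary subsets of $\kappa$ (sets disjoint from some closed unbounded subset of $\kappa$). $I^*=\{\kappa\setminus X: X\in I\}$. For $A\subseteq\kappa$ and $X_\alpha\subseteq\kappa$, $\bigtriangledown_{\alpha\in A}X_\alpha=\{\xi<\kappa:\exists\alpha<\xi\,(\alpha\in A\wedge \xi\in X_\alpha)\}$. $I$ is normal if $X_\alpha\in I$ for all $\alpha<\kappa$ implies $\bigtriangledown_{\alpha<\kappa}X_\alpha\in I$. $I$ is pleasant if whenever $A\in I$ and $X_\alpha\in I$ for all $\alpha$, then $\bigtriangledown_{\alpha\in A}X_\alpha\in I$. $I$ is quasinormal if for every sequence $\langle X_\alpha\rangle_{\alpha<\kappa}$ of members of $I$ there is $Q\in I^*$ with $\bigtriangledown_{\alpha\in Q}X_\alpha\in I$. *)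

(* Defs.v *)
(* a cardinal kappa is modelled as a type T with a strict
   well-order lt (the ordinals < kappa), where T is an initial ordinal. *)
From Stdlib Require Import Classical.

Set Implicit Arguments.

(* |B| < |A|  (cardinality of B strictly less than that of A):
   there is no injection from A into B. *)
Definition card_lt (A B : Type) : Prop :=
  ~ exists f : A -> B, forall x y, f x = f y -> x = y.

Definition strict_well_order (T : Type) (lt : T -> T -> Prop) : Prop :=
  (forall x, ~ lt x x) /\
  (forall x y z, lt x y -> lt y z -> lt x z) /\
  (forall x y, lt x y \/ x = y \/ lt y x) /\
  well_founded lt.

Definition regular_uncountable_cardinal (T : Type) (lt : T -> T -> Prop) : Prop :=
  strict_well_order lt /\
  (* kappa is a cardinal: every proper initial segment has smaller size *)
  (forall a : T, card_lt T {b : T | lt b a}) /\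
  card_lt T nat /\
  (* regular: every subset of size < kappa is bounded *)
  (forall X : T -> Prop, card_lt T {x : T | X x} ->
     exists a, forall x, X x -> lt x a).

Section Ideals.
Variables (T : Type) (lt : T -> T -> Prop).

Definition subset_of (X Y : T -> Prop) : Prop := forall x, X x -> Y x.

Definition is_ideal (I : (T -> Prop) -> Prop) : Prop :=
  (forall X Y, I Y -> subset_of X Y -> I X) /\
  (forall X Y, I X -> I Y -> I (fun x => X x \/ Y x)) /\
  (forall (J : Type) (F : J -> T -> Prop), card_lt T J ->
     (forall j, I (F j)) -> I (fun x => exists j, F j x)) /\
  (forall a : T, I (fun x => x = a)).

Definition closed_set (C : T -> Prop) : Prop :=
  forall a, (exists g, lt g a) ->
    (forall g, lt g a -> exists c, C c /\ lt g c /\ lt c a) -> C a.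

Definition unbounded_set (C : T -> Prop) : Prop :=
  forall g, exists c, C c /\ lt g c.

Definition club (C : T -> Prop) : Prop := closed_set C /\ unbounded_set C.

Definition nonstationary (X : T -> Prop) : Prop :=
  exists C, club C /\ forall x, C x -> ~ X x.

Definition dual_filter (I : (T -> Prop) -> Prop) (Q : T -> Prop) : Prop :=
  I (fun x => ~ Q x).

Definition diag_union (A : T -> Prop) (X : T -> T -> Prop) : T -> Prop :=
  fun xi => exists a, lt a xi /\ A a /\ X a xi.

Definition normal_ideal (I : (T -> Prop) -> Prop) : Prop :=
  forall X : T -> T -> Prop, (forall a, I (X a)) ->
    I (diag_union (fun _ => True) X).

Definition pleasant_ideal (I : (T -> Prop) -> Prop) : Prop :=
  forall (A : T -> Prop) (X : T -> T -> Prop), I A -> (forall a, I (X a)) ->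
    I (diag_union A X).

Definition quasinormal_ideal (I : (T -> Prop) -> Prop) : Prop :=
  forall X : T -> T -> Prop, (forall a, I (X a)) ->
    exists Q, dual_filter I Q /\ I (diag_union Q X).

End Ideals.

(* Main.v *)
Require Import Defs.
From Stdlib Require Import Classical ClassicalEpsilon ProofIrrelevance.

Lemma wf_min (T : Type) (lt : T -> T -> Prop) (wf : well_founded lt)
  (P : T -> Prop) : (exists x, P x) -> exists m, P m /\ forall y, lt y m -> ~ P y.
Proof.
  intros [x Px].
  destruct (classic (exists m, P m /\ forall y, lt y m -> ~ P y)) as [H|H]; auto.
  exfalso. revert Px. pattern x. apply (well_founded_ind wf).
  intros z IH Pz. apply H. exists z. split; auto.
Qed.

Theorem theorem3p5 (T : Type) (lt : T -> T -> Prop)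
  (hk : regular_uncountable_cardinal lt)
  (I : (T -> Prop) -> Prop) (hI : is_ideal I)
  (hNS : forall X : T -> Prop, nonstationary lt X -> I X)
  (hq : quasinormal_ideal lt I) :
  pleasant_ideal lt I /\ normal_ideal lt I.
Proof.
  destruct hk as [[irr [trans [tri wf]]] [hcard [hnat hreg]]].
  destruct hI as [hsub [hun [hcomp hsing]]].
  assert (hpl : pleasant_ideal lt I).
  { intros A X IA IX.
    destruct (classic (I (fun _ => True))) as [Hfull|Hfull].
    { apply (hsub _ _ Hfull). intros x _; exact Logic.I. }
    set (Z := fun (be : T) (x : T) => exists j : {b | lt b be},
                 A (proj1_sig j) /\ X (proj1_sig j) x).
    assert (IZ : forall be, I (Z be)).
    { intro be. apply (hcomp {b | lt b be}
        (fun j x => A (proj1_sig j) /\ X (proj1_sig j) x) (hcard be)).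
      intro j. apply (hsub _ _ (IX (proj1_sig j))). intros x [_ h]; exact h. }
    destruct (hq Z IZ) as [Q [HQ HdQ]].
    unfold dual_filter in HQ.
    assert (hunb : forall g, exists q, Q q /\ lt g q).
    { apply NNPP. intro Hn. apply not_all_ex_not in Hn. destruct Hn as [g Hg].
      apply Hfull.
      assert (Hlt : I (fun x => lt x g)).
      { apply (hsub _ _ (hcomp {b | lt b g} (fun j x => x = proj1_sig j) (hcard g)
                   (fun j => hsing (proj1_sig j)))).
        intros x hx. exists (exist _ x hx). reflexivity. }
      apply (hsub _ _ (hun _ _ (hun _ _ Hlt (hsing g)) HQ)).
      intros x _. destruct (classic (Q x)) as [Qx|Qx]; [|right; exact Qx].
      left. destruct (tri x g) as [h|[h|h]]; [left; exact h|right; exact h|].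
      exfalso. apply Hg. exists x. auto. }
    set (D := fun xi => forall a, lt a xi -> exists b, Q b /\ lt a b /\ lt b xi).
    assert (ID : I (fun x => ~ D x)).
    { apply hNS. exists D. split; [split|].
      - intros a _ H a' Ha'. destruct (H a' Ha') as [c [Dc [h1 h2]]].
        destruct (Dc a' h1) as [b [Qb [h3 h4]]]. exists b. split; [exact Qb|split; [exact h3|eapply trans; eauto]].
      - intro g.
        set (nxt := fun t => proj1_sig (constructive_indefinite_description _ (hunb t))).
        assert (Hn : forall t, Q (nxt t) /\ lt t (nxt t)).
        { intro t. unfold nxt. destruct (constructive_indefinite_description _ (hunb t)); auto. }
        set (q := fix q (n : nat) : T := match n with O => nxt g | S n => nxt (q n) end).
        set (S0 := fun x => exists n, x = q n).
        assert (Hc : card_lt T {x | S0 x}).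
        { intros [h hinj]. apply hnat.
          exists (fun t => proj1_sig (constructive_indefinite_description _ (proj2_sig (h t)))).
          intros x y E.
          destruct (constructive_indefinite_description _ (proj2_sig (h x))) as [n1 e1].
          destruct (constructive_indefinite_description _ (proj2_sig (h y))) as [n2 e2].
          simpl in E. subst n2. apply hinj.
          destruct (h x) as [hx px], (h y) as [hy py]. simpl in *. subst.
          f_equal. apply proof_irrelevance. }
        destruct (hreg S0 Hc) as [a Ha].
        destruct (wf_min _ _ wf (fun a => forall n, lt (q n) a)) as [m [Pm Mm]].
        { exists a. intro n. apply Ha. exists n. reflexivity. }
        exists m. split.
        + intros a' Ha'. pose proof (Mm a' Ha') as Hn2.
          apply not_all_ex_not in Hn2. destruct Hn2 as [n Hn2].
          exists (q (S n)). destruct (Hn (q n)) as [Q1 L1].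
          split; [exact Q1|]. split; [|apply Pm].
          destruct (tri a' (q n)) as [h|[h|h]].
          * eapply trans; eauto.
          * subst; exact L1.
          * contradiction.
        + eapply trans; [apply (Hn g)|apply (Pm O)].
      - intros x Dx nDx. exact (nDx Dx). }
    apply (hsub _ _ (hun _ _ HdQ ID)).
    intros xi [a [ha [Aa Xa]]].
    destruct (classic (D xi)) as [Dxi|Dxi]; [left|right; exact Dxi].
    destruct (Dxi a ha) as [b [Qb [hab hb]]].
    exists b. split; [exact hb|]. split; [exact Qb|].
    exists (exist _ a hab). simpl. auto. }
  split; [exact hpl|].
  intros X IX. destruct (hq X IX) as [Q [HQ HdQ]].
  pose proof (hpl (fun x => ~ Q x) X HQ IX) as H2.
  apply (hsub _ _ (hun _ _ HdQ H2)).
  intros xi [a [ha [_ Xa]]].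
  destruct (classic (Q a)); [left|right]; exists a; auto.
Qed.
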